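(* Let $E$ be a directed graph and let $G(E)$ carry a Hausdorff topology making it a topological semigroup such that its set of idempotents $E(G(E))$ is compact. Then $G(E)$ is closed in every topological semigroup $S$ which contains $G(E)$ as a subsemigroup (and topological subspace).
   Context: All spaces are Hausdorff. $E(T)$ denotes the set of idempotents of a semigroup $T$. A directed graph $E=(E^0,E^1,r,s)$ has vertices $E^0$, edges $E^1$, source/range maps $s,r:E^1\to E^0$; paths are vertices and sequences of edges $e_1\ldots e_n$ with $r(e_i)=s(e_{i+1})$. The graph inverse semigroup $G(E)$ is the semigroup with zero $0$ generated by $E^0$, $E^1$, $E^{-1}=\{e^{-1}\mid e\in E^1\}$ subject to: for $a,b\in E^0$, $e,f\in E^1$: $ab=a$ if $a=b$, else $0$; $s(e)e=er(e)=e$; $e^{-1}s(e)=r(e)e^{-1}=e^{-1}$; $e^{-1}f=r(e)$ if $e=f$, else $0$. Non-zero elements are uniquely $uv^{-1}$ with paths $u,v$, $r(u)=r(v)$, multiplied by $u_1v_1^{-1}\cdot u_2v_2^{-1}=u_1wv_2^{-1}$ if $u_2=v_1w$, $u_1(v_2w)^{-1}$ if $v_1=u_2w$, else $0$. *)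

(* Defs.v *)
From HB Require Import structures.
From mathcomp Require Import all_boot all_order.
From mathcomp Require Import boolp classical_sets functions topology.
Set Implicit Arguments. Unset Strict Implicit. Unset Printing Implicit Defensive.
Local Open Scope classical_set_scope.

(* A path is represented as a pair
   (a, es) : a start vertex and a list of edges.  (a, [::]) is the vertex a;
   (a, e1 :: ... :: en) is the path e1...en, with a = s(e1). *)
Section GraphInverseSemigroup.
Variables (V Ed : eqType) (r s : Ed -> V).

Definition gpath := (V * seq Ed)%type.

Definition valid_path (p : gpath) : bool :=
  match p.2 with
  | [::] => true
  | e :: es => (s e == p.1) && path (fun e f => r e == s f) e es
  end.

Definition prange (p : gpath) : V :=
  match p.2 with
  | [::] => p.1
  | e :: es => r (last e es)
  end.

(* Elements of G(E): None is 0; Some (u, v) is u v^{-1}. *)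
Definition graph_inv_sg := option (gpath * gpath).

Definition GE_elem (x : graph_inv_sg) : Prop :=
  match x with
  | None => True
  | Some (u, v) => valid_path u /\ valid_path v /\ prange u = prange v
  end.

Definition GE_set : set graph_inv_sg := [set x | GE_elem x].

(* u1 v1^{-1} . u2 v2^{-1} = u1 w v2^{-1} if u2 = v1 w,
                           = u1 (v2 w)^{-1} if v1 = u2 w, else 0 *)
Definition GE_mul (x y : graph_inv_sg) : graph_inv_sg :=
  match x, y with
  | Some (u1, v1), Some (u2, v2) =>
      if (v1.1 == u2.1) && prefix v1.2 u2.2 then
        Some ((u1.1, u1.2 ++ drop (size v1.2) u2.2), v2)
      else if (u2.1 == v1.1) && prefix u2.2 v1.2 then
        Some (u1, (v2.1, v2.2 ++ drop (size u2.2) v1.2))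
      else None
  | _, _ => None
  end.

End GraphInverseSemigroup.

Definition topological_semigroup (T : topologicalType) (m : T -> T -> T) : Prop :=
  hausdorff_space T /\ associative m /\ continuous (fun p : T * T => m p.1 p.2).

Definition topological_embedding (T S : topologicalType) (f : T -> S) : Prop :=
  injective f /\ continuous f /\
  forall U : set T, open U -> exists W : set S, open W /\ f @` U = W `&` range f.

(* Main.v *)
Require Import Defs.
From HB Require Import structures.
From mathcomp Require Import all_boot all_order.
From mathcomp Require Import boolp classical_sets functions topology.
From mathcomp Require Import zify.
Set Implicit Arguments. Unset Strict Implicit. Unset Printing Implicit Defensive.
Local Open Scope classical_set_scope.

Definition idl (V Ed : eqType) (y : graph_inv_sg V Ed) : graph_inv_sg V Ed :=
  if y is Some (u, v) then Some (u, u) else None.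
Definition idr (V Ed : eqType) (y : graph_inv_sg V Ed) : graph_inv_sg V Ed :=
  if y is Some (u, v) then Some (v, v) else None.

Lemma mul_idl (V Ed : eqType) (y : graph_inv_sg V Ed) : GE_mul (idl y) y = y.
Proof.
case: y => [[[a su] [b sv]]|] //=.
by rewrite eqxx prefix_refl drop_size cats0.
Qed.

Lemma mul_idr (V Ed : eqType) (y : graph_inv_sg V Ed) : GE_mul y (idr y) = y.
Proof.
case: y => [[[a su] [b sv]]|] //=.
by rewrite eqxx prefix_refl drop_size cats0.
Qed.

Lemma mul0l (V Ed : eqType) (y : graph_inv_sg V Ed) : GE_mul None y = None.
Proof. by []. Qed.

Lemma mul0r (V Ed : eqType) (y : graph_inv_sg V Ed) : GE_mul y None = None.
Proof. by case: y => [[]|]. Qed.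

Lemma idem_char (V Ed : eqType) (u v : gpath V Ed) :
  GE_mul (Some (u, v)) (Some (u, v)) = Some (u, v) -> u = v.
Proof.
case: u v => [a su] [b sv] /=.
case: ifP => [/andP[/eqP eba pre] [] H|_].
  have : size (drop (size sv) su) = 0.
    by have := congr1 size H; rewrite size_cat; lia.
  rewrite size_drop => hs.
  move: pre; rewrite prefixE take_oversize; last by lia.
  by move/eqP => ->; rewrite eba.
case: ifP => [/andP[/eqP eab pre] [] H|_ //].
have : size (drop (size su) sv) = 0.
  by have := congr1 size H; rewrite size_cat; lia.
rewrite size_drop => hs.
move: pre; rewrite prefixE take_oversize; last by lia.
by move/eqP => ->; rewrite eab.
Qed.

Lemma valid_prefix (V Ed : eqType) (r s : Ed -> V) a s1 s2 :
  valid_path r s (a, s1 ++ s2) -> valid_path r s (a, s1).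
Proof.
case: s1 => [|e es] //; rewrite /valid_path /=.
by rewrite cat_path => /andP[-> /andP[-> _]].
Qed.

Lemma comp_ext (V Ed : eqType) (u p : gpath V Ed) :
  GE_mul (Some (u, u)) (Some (p, p)) <> None -> p <> u ->
  (forall n, n < size u.2 -> p <> (u.1, take n u.2)) ->
  exists h t, p = (u.1, u.2 ++ h :: t).
Proof.
case: u p => [a su] [b sp] /=.
case: ifP => [/andP[/eqP eab pre] _ hne _|_].
  move/prefixP: pre => [[|h t] esp]; first by exfalso; apply: hne; rewrite esp cats0 eab.
  by exists h, t; rewrite esp eab.
case: ifP => [/andP[/eqP eba pre] _ hne hn|_ //].
exfalso.
case: (ltnP (size sp) (size su)) => hs.
  apply: (hn _ hs); move: pre; rewrite prefixE => /eqP ->; by rewrite eba.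
apply: hne; move: pre; rewrite prefixE take_oversize // => /eqP ->; by rewrite eba.
Qed.

Lemma comp_h (V Ed : eqType) (a : V) (su : seq Ed) h t h2 t2 :
  GE_mul (Some ((a, su ++ h :: t), (a, su ++ h :: t)))
         (Some ((a, su ++ h2 :: t2), (a, su ++ h2 :: t2))) <> None -> h = h2.
Proof.
rewrite /= eqxx /= !prefix_catr // eqxx /=.
case: (h =P h2) => // /eqP hne.
by rewrite eq_sym (negbTE hne).
Qed.

Lemma mul_ext (V Ed : eqType) (a : V) (su : seq Ed) h t2 :
  GE_mul (Some ((a, su ++ [:: h]), (a, su ++ [:: h])))
         (Some ((a, su ++ h :: t2), (a, su ++ h :: t2))) =
  Some ((a, su ++ h :: t2), (a, su ++ h :: t2)).
Proof.
rewrite /= eqxx /= prefix_catr // eqxx /= eqxx prefix0s /=.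
have -> : su ++ h :: t2 = (su ++ [:: h]) ++ t2 by rewrite -catA.
by rewrite drop_size_cat.
Qed.

Lemma mul_ext2 (V Ed : eqType) (a : V) (su : seq Ed) h :
  GE_mul (Some ((a, su ++ [:: h]), (a, su ++ [:: h]))) (Some ((a, su), (a, su))) =
  Some ((a, su ++ [:: h]), (a, su ++ [:: h])).
Proof.
rewrite /= eqxx /=.
have -> : prefix (su ++ [:: h]) su = false.
  apply/negbTE/negP; rewrite prefixE size_cat /= take_oversize ?leq_addr //.
  by move/eqP/(congr1 size); rewrite size_cat /=; lia.
by rewrite prefix_prefix /= drop_size_cat.
Qed.
Lemma cont2 (T : topologicalType) (m : T -> T -> T) :
  continuous (fun p : T * T => m p.1 p.2) ->
  forall a b W, nbhs (m a b) W -> exists A B, nbhs a A /\ nbhs b B /\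
    forall s t, A s -> B t -> W (m s t).
Proof.
move=> hc a b W hW.
have := hc (a, b) W hW.
case=> -[A B] /= [hA hB] hAB.
exists A, B; split => //; split => // s t As Bt.
exact: (hAB (s, t)).
Qed.

Lemma cont2_flip (T : topologicalType) (m : T -> T -> T) :
  continuous (fun p : T * T => m p.1 p.2) ->
  forall a b W, nbhs (m b a) W -> exists A B, nbhs a A /\ nbhs b B /\
    forall s t, A s -> B t -> W (m t s).
Proof.
move=> hc a b W hW.
have [B [A [hB [hA hAB]]]] := cont2 hc hW.
exists A, B; split => //; split => // s t As Bt.
exact: hAB.
Qed.

Lemma sep (T : topologicalType) : hausdorff_space T -> forall a b : T,
  (forall A B, nbhs a A -> nbhs b B -> A `&` B !=set0) -> a = b.
Proof. by move=> h a b H; apply: h. Qed.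

Lemma sepN (T : topologicalType) : hausdorff_space T -> forall a b : T,
  a <> b -> exists A B, nbhs a A /\ nbhs b B /\ forall z, A z -> B z -> False.
Proof.
move=> h a b ab.
case: (pselect (exists A B, nbhs a A /\ nbhs b B /\ forall z, A z -> B z -> False)) => // hno.
exfalso; apply: ab; apply: (sep h) => A B hA hB.
case: (pselect (A `&` B !=set0)) => // hne.
exfalso; apply: hno; exists A, B; split => //; split => // z Az Bz.
by apply: hne; exists z.
Qed.

Lemma avoid1 (T : topologicalType) : hausdorff_space T -> forall a b : T,
  a <> b -> exists N, nbhs a N /\ ~ N b.
Proof.
move=> h a b ab.
have [A [B [hA [hB hAB]]]] := sepN h ab.
exists A; split => // Ab.
exact: (hAB b Ab (nbhs_singleton hB)).
Qed.

Lemma avoidN (T : topologicalType) : hausdorff_space T -> forall (a : T) (N : nat) (pt : nat -> T),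
  exists U, nbhs a U /\ forall n, (n < N)%N -> pt n <> a -> ~ U (pt n).
Proof.
move=> h a; elim => [|N IH] pt.
  by exists setT; split; [exact: filterT | by []].
have [U [hU HU]] := IH pt.
case: (pselect (pt N = a)) => hN.
  exists U; split => // n; rewrite ltnS leq_eqVlt => /orP[/eqP -> //|]; exact: HU.
have [N1 [hN1 N1n]] := avoid1 h (nesym hN).
exists (U `&` N1); split; first exact: filterI.
move=> n; rewrite ltnS leq_eqVlt => /orP[/eqP -> _ [] //|ltn hn [] Un _].
exact: (HU n ltn hn Un).
Qed.

Lemma iso (V Ed : eqType) (r s : Ed -> V) (T : topologicalType) (mT : T -> T -> T)
  (g : graph_inv_sg V Ed -> T) :
  hausdorff_space T -> continuous (fun p : T * T => mT p.1 p.2) ->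
  {in GE_set r s &, injective g} ->
  (forall x y, GE_set r s x -> GE_set r s y -> g (GE_mul x y) = mT (g x) (g y)) ->
  forall u : gpath V Ed, valid_path r s u ->
  exists N, nbhs (g (Some (u, u))) N /\ forall y, GE_set r s y -> GE_mul y y = y ->
     N (g y) -> y = Some (u, u).
Proof.
move=> hT hc ginj gmul [a su] hu.
set e := Some ((a, su), (a, su)).
have He : GE_set r s e by rewrite /GE_set /GE_elem /=.
have Hnone : GE_set r s None by rewrite /GE_set /GE_elem.
have ginj' : forall y z, GE_set r s y -> GE_set r s z -> g y = g z -> y = z.
  by move=> y z Hy Hz; apply: ginj; rewrite in_setE.
case: (pselect (exists N, nbhs (g e) N /\ forall y, GE_set r s y -> GE_mul y y = y ->
     N (g y) -> y = e)) => // hno; exfalso.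
have H : forall N, nbhs (g e) N -> exists y, [/\ GE_set r s y, GE_mul y y = y, N (g y) & y <> e].
  move=> N hN.
  case: (pselect (exists y, [/\ GE_set r s y, GE_mul y y = y, N (g y) & y <> e])) => // hn.
  exfalso; apply: hno; exists N; split => // y Hy Hyy Ny.
  case: (pselect (y = e)) => // ye; exfalso; apply: hn; by exists y.
have gNe : g None <> g e by move/(ginj' _ _ Hnone He).
have [U0a [hU0a U0aN]] := avoid1 hT (nesym gNe).
have [U0b [hU0b U0bP]] := avoidN hT (g e) (size su)
  (fun n => g (Some ((a, take n su), (a, take n su)))).
have hee : mT (g e) (g e) = g e by rewrite -gmul //; congr g; exact: (mul_idl e).
have hU0 : nbhs (mT (g e) (g e)) (U0a `&` U0b) by rewrite hee; apply: filterI.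
have [A [B [hA [hB hAB]]]] := cont2 hc hU0.
set W := A `&` B `&` U0a `&` U0b.
have hW : nbhs (g e) W by repeat apply: filterI.
have classify : forall y, GE_set r s y -> GE_mul y y = y -> W (g y) -> y <> e ->
   exists h t, y = Some ((a, su ++ h :: t), (a, su ++ h :: t)).
  move=> [[p q]|] Hy Hyy [[[Ay By] Uay] Uby] ye; last by [].
  have pq := idem_char Hyy; subst q.
  have nz : GE_mul e (Some (p, p)) <> None.
    move=> Hz; apply: U0aN.
    have := hAB _ _ (nbhs_singleton hA) By.
    by rewrite -gmul // Hz => -[].
  have pu : p <> (a, su) by move=> pe; apply: ye; rewrite pe.
  have pn : forall n, (n < size (a, su).2)%N -> p <> ((a, su).1, take n (a, su).2).
    move=> n hn pe; apply: ye; apply: ginj' => //.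
    apply: contrapT => hne; apply: (U0bP n hn).
      by move=> he; apply: hne; rewrite -he pe.
    by rewrite -pe.
  have [h [t ->]] := comp_ext nz pu pn.
  by exists h, t.
have [y1 [Hy1 Hy1i Wy1 y1e]] := H W hW.
have [h [t y1E]] := classify y1 Hy1 Hy1i Wy1 y1e.
set e' := Some ((a, su ++ [:: h]), (a, su ++ [:: h])).
have He' : GE_set r s e'.
  move: Hy1; rewrite y1E => -[v1 _].
  have : valid_path r s (a, (su ++ [:: h]) ++ t) by rewrite -catA.
  by move/valid_prefix => v; split.
have e'e : g e' <> g e.
  move/(ginj' _ _ He' He) => -[] /(congr1 size); rewrite size_cat /=; lia.
have [N1 [N2 [hN1 [hN2 N12]]]] := sepN hT (nesym e'e).
have he'e : mT (g e') (g e) = g e' by rewrite -gmul // mul_ext2.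
have hN2' : nbhs (mT (g e') (g e)) N2 by rewrite he'e.
have [A' [B' [hA' [hB' hAB']]]] := cont2 hc hN2'.
have [y2 [Hy2 Hy2i Wy2 y2e]] := H (W `&` N1 `&` B') ltac:(by repeat apply: filterI).
case: Wy2 => -[Wy2 N1y2] B'y2.
have [h2 [t2 y2E]] := classify y2 Hy2 Hy2i Wy2 y2e.
have hh : h = h2.
  apply: (@comp_h _ _ a su h t h2 t2) => Hz.
  move: Wy1 Wy2 => [[[Ay1 _] _] _] [[[_ By2] _] _].
  have := hAB _ _ Ay1 By2; rewrite -gmul // y1E y2E Hz => -[] //.
subst h2.
apply: (N12 (g y2)) => //.
have : g y2 = mT (g e') (g y2) by rewrite -gmul // y2E mul_ext.
move=> ->; exact: hAB' (nbhs_singleton hA') B'y2.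
Qed.

Lemma step (V Ed : eqType) (r s : Ed -> V) (T : topologicalType) (mT : T -> T -> T)
  (g : graph_inv_sg V Ed -> T) (S : topologicalType) (f : T -> S)
  (x : S) (k : graph_inv_sg V Ed -> graph_inv_sg V Ed) (o : S -> S -> S)
  (P : graph_inv_sg V Ed -> Prop) :
  hausdorff_space T -> continuous (fun p : T * T => mT p.1 p.2) ->
  {in GE_set r s &, injective g} ->
  (forall x y, GE_set r s x -> GE_set r s y -> g (GE_mul x y) = mT (g x) (g y)) ->
  compact (g @` [set x | GE_set r s x /\ GE_mul x x = x]) ->
  hausdorff_space S -> continuous f ->
  (forall y, GE_set r s y -> GE_set r s (k y) /\ GE_mul (k y) (k y) = k y) ->
  (forall y, GE_set r s y -> f (g y) = o (f (g (k y))) (f (g y))) ->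
  (forall y, GE_set r s y -> o (f (g None)) (f (g y)) = f (g None)) ->
  (forall a b W, nbhs (o a b) W -> exists A B, nbhs a A /\ nbhs b B /\
    forall s t, A s -> B t -> W (o s t)) ->
  (forall B, nbhs x B -> exists y, [/\ GE_set r s y, P y & B (f (g y))]) ->
  x = f (g None) \/ exists u, valid_path r s u /\
    forall B, nbhs x B -> exists y, [/\ GE_set r s y, P y /\ k y = Some (u, u) & B (f (g y))].
Proof.
move=> hT hc ginj gmul hK hS fc Hk Ho Ho0 Hoc HQ.
pose Filt := [set A : set T | exists B, nbhs x B /\
  forall y, GE_set r s y -> P y -> B (f (g y)) -> A (g (k y))].
have FF : ProperFilter Filt.
  split.
    move=> [B [hB HB]].
    by have [y [Hy Py By]] := HQ B hB; exact: (HB y Hy Py By).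
  split.
  - by exists setT; split; [exact: filterT|].
  - move=> A1 A2 [B1 [hB1 HB1]] [B2 [hB2 HB2]].
    exists (B1 `&` B2); split; first exact: filterI.
    by move=> y Hy Py [B1y B2y]; split; [exact: HB1|exact: HB2].
  - move=> A1 A2 A12 [B [hB HB]]; exists B; split => // y Hy Py By.
    exact/A12/HB.
have FK : Filt (g @` [set x | GE_set r s x /\ GE_mul x x = x]).
  exists setT; split; first exact: filterT.
  by move=> y Hy _ _; exists (k y) => //; exact: Hk.
have [c [[e0 [He0 He0i] <-] hcl]] := hK Filt FF FK.
pose AB B := [set t | exists y, [/\ GE_set r s y, P y, B (f (g y)) & t = g (k y)]].
have FAB : forall B, nbhs x B -> Filt (AB B).
  move=> B hB; exists B; split => // y Hy Py By; by exists y.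
case: e0 He0 He0i hcl => [[u v]|] He0 He0i hcl.
  have uv := idem_char He0i; subst v.
  right; exists u; split; first by case: He0.
  have [N [hN HN]] := iso hT hc ginj gmul (proj1 He0).
  move=> B hB.
  have [t [[y [Hy Py By ->]] Nt]] := hcl _ _ (FAB B hB) hN.
  exists y; split => //; split => //.
  by have [Hky Hkyi] := Hk y Hy; exact: HN.
left.
set z0 := f (g None).
have oz : o z0 x = z0.
  apply: (sep hS) => W0 W1 hW0 hW1.
  have [A1 [B1 [hA1 [hB1 H1]]]] := Hoc _ _ _ hW0.
  have [y [Hy _ By]] := HQ B1 hB1.
  exists z0; split; last exact: nbhs_singleton.
  by have := H1 _ _ (nbhs_singleton hA1) By; rewrite /z0 Ho0.
apply: (sep hS) => B0 W hB0 hW.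
rewrite -oz in hW.
have [A1 [B1 [hA1 [hB1 H1]]]] := Hoc _ _ _ hW.
have hA1' : nbhs (g None) (f @^-1` A1) by exact: fc.
have [t [[y [Hy Py [B0y B1y] ->]] A1t]] := hcl _ _ (FAB _ (filterI hB0 hB1)) hA1'.
exists (f (g y)); split => //.
rewrite (Ho y Hy); exact: H1.
Qed.

Theorem lemma2p5 (V Ed : eqType) (r s : Ed -> V)
  (T : topologicalType) (mT : T -> T -> T) (g : graph_inv_sg V Ed -> T)
  (S : topologicalType) (mS : S -> S -> S) (f : T -> S) :
  set_bij (GE_set r s) setT g ->
  (forall x y, GE_set r s x -> GE_set r s y ->
     g (GE_mul x y) = mT (g x) (g y)) ->
  topological_semigroup mT ->
  compact (g @` [set x | GE_set r s x /\ GE_mul x x = x]) ->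
  topological_semigroup mS ->
  topological_embedding f ->
  (forall x y, f (mT x y) = mS (f x) (f y)) ->
  closed (range f).
Proof.
move=> [_ ginj gsurj] gmul [hT [_ hcT]] hK [hS [_ hcS]] [_ [fc _]] fmul x hx.
have Hnone : GE_set r s None by rewrite /GE_set /GE_elem.
have HQ0 : forall B, nbhs x B -> exists y, [/\ GE_set r s y, True & B (f (g y))].
  move=> B hB; have [_ [[t _ <-] Bt]] := hx B hB.
  have [y Hy gy] := gsurj t I.
  by exists y; split => //; rewrite gy.
have Hkl : forall y, GE_set r s y -> GE_set r s (idl y) /\ GE_mul (idl y) (idl y) = idl y.
  move=> [[u v]|] Hy; last by split.
  case: Hy => vu [vv pr]; split; first by rewrite /GE_set /GE_elem /=.
  exact: (mul_idl (Some (u, u))).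
have Hkr : forall y, GE_set r s y -> GE_set r s (idr y) /\ GE_mul (idr y) (idr y) = idr y.
  move=> [[u v]|] Hy; last by split.
  case: Hy => vu [vv pr]; split; first by rewrite /GE_set /GE_elem /=.
  exact: (mul_idl (Some (v, v))).
have Hol : forall y, GE_set r s y -> f (g y) = mS (f (g (idl y))) (f (g y)).
  move=> y Hy; rewrite -fmul -gmul ?mul_idl //; exact: (proj1 (Hkl y Hy)).
have Hor : forall y, GE_set r s y -> f (g y) = (fun a b => mS b a) (f (g (idr y))) (f (g y)).
  move=> y Hy /=; rewrite -fmul -gmul ?mul_idr //; exact: (proj1 (Hkr y Hy)).
have Ho0l : forall y, GE_set r s y -> mS (f (g None)) (f (g y)) = f (g None).
  by move=> y Hy; rewrite -fmul -gmul.
have Ho0r : forall y, GE_set r s y -> (fun a b => mS b a) (f (g None)) (f (g y)) = f (g None).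
  by move=> y Hy /=; rewrite -fmul -gmul // mul0r.
case: (step hT hcT ginj gmul hK hS fc Hkl Hol Ho0l (cont2 hcS) HQ0) => [->|[u [vu HQ1]]].
  by exists (g None).
case: (step hT hcT ginj gmul hK hS fc Hkr Hor Ho0r (@cont2_flip S mS hcS) HQ1) => [->|[v [vv HQ2]]].
  by exists (g None).
have -> : x = f (g (Some (u, v))).
  apply: (sep hS) => B W hB hW.
  have [y [Hy [[_ eu] ev] By]] := HQ2 B hB.
  have yE : y = Some (u, v).
    move: eu ev; case: y {Hy By} => [[u' v']|] //=.
    by move=> [eu1 _] [ev1 _]; rewrite eu1 ev1.
  subst y.
  by exists (f (g (Some (u, v)))); split => //; exact: nbhs_singleton.
by exists (g (Some (u, v))).
Qed.
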